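(* Let $(X,d)$ be a compact metric space, $\epsilon>0$, and $A$ an $\epsilon$-approximation of $X$. Then the map $p:X\to\mathcal{U}_{4\epsilon}(A)$ given by $p(x)=\{a\in A\mid d(x,a)=d(x,A)\}$ is well-defined and continuous.
   Context: A finite set $A\subset X$ is an $\epsilon$-approximation of $X$ if for every $x\in X$ there is $a\in A$ with $d(x,a)<\epsilon$. $\mathcal{U}_{4\epsilon}(A)=\{C\subseteq A\mid C\neq\emptyset,\ \mathrm{diam}(C)<4\epsilon\}$, a finite poset under inclusion regarded as a finite $T_0$ space whose open sets are the down-sets. $d(x,A)=\min_{a\in A}d(x,a)$. *)

(* Defs.v *)
From HB Require Import structures.
From mathcomp Require Import all_boot all_order all_algebra.
From mathcomp Require Import all_classical all_reals all_analysis.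
Set Implicit Arguments. Unset Strict Implicit. Unset Printing Implicit Defensive.
Import Order.TTheory GRing.Theory Num.Theory.
Local Open Scope classical_set_scope.
Local Open Scope ring_scope.

Section Defs.
Context {R : realType} {X : metricType R}.

Definition eps_approx (eps : R) (A : set X) : Prop :=
  finite_set A /\ forall x : X, exists2 a, A a & mdist x a < eps.

Definition diam (C : set X) : R :=
  sup [set mdist ab.1 ab.2 | ab in C `*` C].

Definition dist_to (x : X) (A : set X) : R :=
  inf [set mdist x a | a in A].

Definition Ucover (r : R) (A : set X) : set (set X) :=
  [set C | [/\ C `<=` A, C !=set0 & diam C < r]].

(* open sets of the finite T0 space U_r(A): the down-sets (for inclusion) *)
Definition Ucover_open (r : R) (A : set X) (D : set (set X)) : Prop :=
  D `<=` Ucover r A /\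
  forall C C', D C -> Ucover r A C' -> C' `<=` C -> D C'.

Definition nearest (A : set X) (x : X) : set X :=
  [set a | A a /\ mdist x a = dist_to x A].

End Defs.

(* Main.v *)
Require Import Defs.
From HB Require Import structures.
From mathcomp Require Import all_boot all_order all_algebra.
From mathcomp Require Import all_classical all_reals all_analysis.
From mathcomp Require Import lra.
Import Order.TTheory GRing.Theory Num.Theory.
Local Open Scope classical_set_scope.
Local Open Scope ring_scope.

Section Helpers.
Context {R : realType}.

Lemma seq_min (T : eqType) (s : seq T) (f : T -> R) : s != [::] ->
  exists2 a, a \in s & forall b, b \in s -> f a <= f b.
Proof.
elim: s => [//|c s IH] _.
case: s IH => [|d s] IH.
  by exists c; rewrite ?mem_seq1 // => b; rewrite mem_seq1 => /eqP ->.
have [a ain amin] := IH isT.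
case: (leP (f c) (f a)) => h.
  exists c; first by rewrite mem_head.
  move=> b; rewrite in_cons => /orP[/eqP -> //|bin].
  exact: le_trans h (amin _ bin).
exists a; first by rewrite in_cons ain orbT.
move=> b; rewrite in_cons => /orP[/eqP -> |bin]; first exact: ltW.
exact: amin.
Qed.

Lemma seq_pos (T : eqType) (s : seq T) (P : T -> Prop) (f : T -> R) :
  (forall a, a \in s -> P a -> 0 < f a) ->
  exists2 d, 0 < d & forall a, a \in s -> P a -> d <= f a.
Proof.
elim: s => [|c s IH] H.
  by exists 1 => //.
have [d d0 hd] : exists2 d, 0 < d & forall a, a \in s -> P a -> d <= f a.
  by apply: IH => a ain; apply: H; rewrite in_cons ain orbT.
case: (pselect (P c)) => Pc.
  have fc := H c (mem_head _ _) Pc.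
  exists (Num.min d (f c)); first by rewrite lt_min d0 fc.
  move=> a; rewrite in_cons => /orP[/eqP -> _|ain Pa]; first by rewrite ge_min lexx orbT.
  by rewrite ge_min hd.
exists d => // a; rewrite in_cons => /orP[/eqP -> //|ain Pa]; exact: hd.
Qed.

Context {X : metricType R}.

Lemma dist_le (x : X) (A : set X) b : A b -> dist_to x A <= mdist x b.
Proof.
move=> Ab; rewrite /dist_to.
have := @ge_inf R [set mdist x a | a in A].
apply.
  by exists 0 => _ [a _ <-]; exact: mdist_ge0.
by exists b.
Qed.

Lemma dist_ge (x : X) (A : set X) m : A !=set0 ->
  (forall b, A b -> m <= mdist x b) -> m <= dist_to x A.
Proof.
move=> [a Aa] H; apply: lb_le_inf; first by exists (mdist x a), a.
by move=> _ [b Ab <-]; exact: H.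
Qed.

End Helpers.

Theorem lemma4p1 (R : realType) (X : metricType R) (eps : R) (A : set X) :
  compact [set: X] -> 0 < eps -> eps_approx eps A ->
  (forall x : X, Ucover (4 * eps) A (nearest A x)) /\
  (forall D : set (set X), Ucover_open (4 * eps) A D ->
     open [set x : X | D (nearest A x)]).
Proof.
move=> _ eps0 [fA appr].
have [s sE] := iffLR (@finite_seqP X A) fA.
have minx : forall x : X, exists2 a, A a &
    mdist x a = dist_to x A /\ dist_to x A < eps.
  move=> x; have [a0 Aa0 xa0] := appr x.
  have sne : s != [::].
    by apply/eqP => s0; move: Aa0; rewrite sE s0.
  have [a ain amin] := @seq_min _ _ s (fun b => mdist x b) sne.
  have Aa : A a by rewrite sE.
  have e : mdist x a = dist_to x A.
    apply/le_anti; rewrite dist_le // andbT.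
    apply: dist_ge; first by exists a.
    by move=> b; rewrite sE => /amin.
  exists a => //; split => //.
  by rewrite -e (le_lt_trans _ xa0) // e dist_le.
have part1 : forall x : X, Ucover (4 * eps) A (nearest A x).
  move=> x; have [a Aa [e de]] := minx x.
  split; first by move=> b [].
    by exists a.
  have : diam (nearest A x) <= 2 * dist_to x A.
    apply: ge_sup; first by exists (mdist a a), (a, a).
    move=> _ [[b c] [/= [Ab eb] [Ac ec]] <-] /=.
    apply: (le_trans (metric_triangle b x c)).
    by rewrite metric_sym eb ec; lra.
  move=> h; apply: (le_lt_trans h).
  have d0 : 0 <= dist_to x A by rewrite -e mdist_ge0.
  lra.
split => // D [DU Ddown].
rewrite openE => x /= Dx; rewrite /interior.
have [a Aa [e de]] := minx x.
have [|d d0 hd] := seq_pos _ s (fun b => ~ nearest A x b)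
   (fun b => mdist x b - dist_to x A).
  move=> b bin nb; have Ab : A b by rewrite sE.
  rewrite subr_gt0 lt_neqAle dist_le // andbT.
  by apply/eqP => h; apply: nb; split.
apply/nbhs_ballP; exists (d / 2); first by rewrite /= divr_gt0.
move=> y; rewrite ballEmdist /= => xy.
apply: (Ddown _ _ Dx (part1 y)).
move=> b [Ab eb].
case: (pselect (nearest A x b)) => // nb; exfalso.
have bin : b \in s by move: Ab; rewrite sE.
have h1 := hd b bin nb.
have h2 : dist_to y A <= mdist y a by exact: dist_le.
have h3 := metric_triangle y x a.
have h4 := metric_triangle x y b.
rewrite (metric_sym y x) in h3.
lra.
Qed.
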